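(* If $(G,\phi,\tau)$ is an optimal solution to the problem (RE) of maximizing $\phi_t+\phi_d(1-G(\tau))$ over all $(G,\phi,\tau)$ with $G$ a distribution on $[\underline{\theta},\overline{\theta}]$, $\phi=(\phi_t,\phi_d)\in\mathbb{R}^2$, $\tau\in\mathbb{R}$, subject to (w-P), (w-HE) and $E_G[s]=\mu$, then $G(s)=G(\mu+\phi_d)$ for all $s\in[\mu+\phi_d,\overline{\theta})$.
   Context: $F$ is a distribution with lowest and highest support points $0\le\underline{\theta}<\overline{\theta}<\infty$ and mean $\mu$. For a CDF $G$ on $[\underline{\theta},\overline{\theta}]$ and fees $(\phi_t,\phi_d)$: (w-P) means $\phi_t\le\int_{\mu+\phi_d}^{\overline{\theta}}[s-(\mu+\phi_d)]dG(s)$; (w-HE) for a threshold $\tau$ means $\tau-\phi_d=E_G[s\mid s\le\tau]$ and $\tau'-\phi_d\ge E_G[s\mid s\le\tau']$ for all $\tau'>\tau$. *)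

(* Defs.v *)
From HB Require Import structures.
From mathcomp Require Import all_boot all_order all_algebra.
From mathcomp Require Import all_classical all_reals all_analysis.
Set Implicit Arguments. Unset Strict Implicit. Unset Printing Implicit Defensive.
Import Order.TTheory GRing.Theory Num.Theory.
Local Open Scope classical_set_scope.
Local Open Scope ring_scope.

Section Defs.
Variable R : realType.

(* A "distribution G" is a probability measure on the Borel sets of R;
   its CDF is G(x) = P((-oo, x]). *)
Definition cdfG (P : probability R R) (x : R) : R := fine (P [set` `]-oo, x]]).

Definition supported_on (P : probability R R) (a b : R) : Prop :=
  P [set` `[a, b]] = 1%E.

Definition meanG (P : probability R R) : R := Rintegral P setT (fun s => s).

Definition condexp_le (P : probability R R) (t : R) : R :=
  Rintegral P [set` `]-oo, t]] (fun s => s) / cdfG P t.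

Definition wP (P : probability R R) (mu thh pt pd : R) : Prop :=
  pt <= Rintegral P [set` `[mu + pd, thh]] (fun s => s - (mu + pd)).

(* (w-HE) for threshold t; the conditional expectation is required to be
   well defined, i.e. G(t) > 0 (then also G(t') > 0 for t' > t). *)
Definition wHE (P : probability R R) (pd t : R) : Prop :=
  [/\ 0 < cdfG P t,
      t - pd = condexp_le P t &
      forall t', t < t' -> condexp_le P t' <= t' - pd].

Definition feasibleRE (thl thh mu : R) (P : probability R R) (pt pd t : R) : Prop :=
  [/\ supported_on P thl thh, wP P mu thh pt pd, wHE P pd t & meanG P = mu].

Definition objRE (P : probability R R) (pt pd t : R) : R :=
  pt + pd * (1 - cdfG P t).

End Defs.

(* Main.v *)
Require Import Defs.
From HB Require Import structures.
From mathcomp Require Import all_boot all_order all_algebra.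
From mathcomp Require Import all_classical all_reals all_analysis.
From mathcomp Require Import measurable_realfun.
From mathcomp Require Import ring lra.
Import Order.TTheory GRing.Theory Num.Theory.
Set Implicit Arguments. Unset Strict Implicit.
Local Open Scope ring_scope.
Local Open Scope classical_set_scope.

Lemma setmemE (T : Type) (A : set T) : [set` A] = A.
Proof. by apply/seteqP; split => x /=; rewrite inE. Qed.

Lemma supp_C0 (R : realType) (Q : probability R R) (a b : R) :
  Q `[a, b] = 1%E -> Q (~` `[a, b]) = 0%E.
Proof.
move=> h; rewrite probability_setC; last exact: measurable_itv.
by rewrite h subee.
Qed.

Lemma supp_int (R : realType) (Q : probability R R) (a b : R) (D : set R) :
  Q `[a, b] = 1%E -> measurable D -> Q.-integrable D (EFin \o id).
Proof.
move=> h mD.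
have mC : measurable (~` `[a, b]) by apply: measurableC; exact: measurable_itv.
apply/(negligible_integrable mC mD) => //.
- by apply/measurable_EFinP; exact: measurable_id.
- exact: supp_C0.
apply: measurable_bounded_integrable.
- exact: measurableD.
- by rewrite (le_lt_trans (probability_le1 _ _)) ?ltry//; exact: measurableD.
- exact: measurable_id.
exists (Num.max `|a| `|b|); split; first by rewrite num_real.
move=> M hM s [_ /= hs].
have : `[a, b] s by apply: contrapT.
rewrite /= in_itv /= => /andP[h1 h2].
apply: ltW; apply: le_lt_trans hM.
rewrite le_max; have [s0|s0] := leP 0 s.
  by apply/orP; right; rewrite ger0_norm// (le_trans h2)// ler_norm.
by apply/orP; left; rewrite ltr0_norm// ler0_norm ?lerN2// (le_trans h1) ?ltW.
Qed.

Lemma cst_int (R : realType) (Q : probability R R) (D : set R) (k : R) :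
  measurable D -> Q.-integrable D (EFin \o cst k).
Proof. by move=> mD; apply: finite_measure_integrable_cst. Qed.

Definition FQ (R : realType) (Q : probability R R) (D : set R) : R := fine (Q D).
Definition IQ (R : realType) (Q : probability R R) (D : set R) : R :=
  Rintegral Q D (fun s => s).

Lemma FQ_add (R : realType) (Q : probability R R) (D E : set R) :
  measurable D -> measurable E -> FQ Q D = FQ Q (D `&` E) + FQ Q (D `\` E).
Proof.
move=> mD mE; rewrite /FQ (measureDI Q mD mE) addrC fineD//.
- by apply: fin_num_measure; exact: measurableI.
- by apply: fin_num_measure; exact: measurableD.
Qed.

Lemma setIDU (R : realType) (D E : set R) : D = (D `&` E) `|` (D `\` E).
Proof.
apply/seteqP; split => x /=.
  by move=> Dx; have [Ex|Ex] := pselect (E x); [left|right].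
by case=> -[].
Qed.

Lemma IQ_add (R : realType) (Q : probability R R) (a b : R) (D E : set R) :
  Q `[a, b] = 1%E -> measurable D -> measurable E ->
  IQ Q D = IQ Q (D `&` E) + IQ Q (D `\` E).
Proof.
move=> h mD mE; rewrite /IQ {1}(setIDU D E) Rintegral_setU//.
- exact: measurableI.
- exact: measurableD.
- by rewrite -setIDU; exact: (supp_int h mD).
by apply/disj_setPS => x [[_ Ex] [_ nEx]].
Qed.

Lemma IQ_ge (R : realType) (Q : probability R R) (a b : R) (D : set R) (u : R) :
  Q `[a, b] = 1%E -> measurable D -> (forall s, D s -> u <= s) ->
  u * FQ Q D <= IQ Q D.
Proof.
move=> h mD hu; rewrite /IQ /FQ -Rintegral_cst//.
apply: le_Rintegral => //; first exact: cst_int.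
exact: (supp_int h mD).
Qed.

Lemma IQ_le (R : realType) (Q : probability R R) (a b : R) (D : set R) (u : R) :
  Q `[a, b] = 1%E -> measurable D -> (forall s, D s -> s <= u) ->
  IQ Q D <= u * FQ Q D.
Proof.
move=> h mD hu; rewrite /IQ /FQ -Rintegral_cst//.
apply: le_Rintegral => //; last exact: cst_int.
exact: (supp_int h mD).
Qed.

Lemma Rint_shift (R : realType) (Q : probability R R) (a b : R) (D : set R) (k : R) :
  Q `[a, b] = 1%E -> measurable D ->
  Rintegral Q D (fun s => s - k) = IQ Q D - k * FQ Q D.
Proof.
move=> h mD; rewrite /IQ /FQ -Rintegral_cst// RintegralB//.
- exact: (supp_int h mD).
- exact: cst_int.
Qed.


Lemma integral_restr (R : realType) (P : probability R R) (E : set R)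
  (mE : measurable E) (D : set R) (f : R -> \bar R) :
  measurable D -> measurable_fun D f ->
  (\int[mrestr P mE]_(s in D) f s = \int[P]_(s in D `&` E) f s)%E.
Proof.
move=> mD mf.
rewrite {1}(setIDU D E) integral_setU//; first last.
- by apply/disj_setPS => x [[_ Ex] [_ nEx]].
- by rewrite -setIDU.
- exact: measurableD.
- exact: measurableI.
rewrite [X in (X + _)%E](eq_measure_integral P); last first.
  move=> B mB BDE; rewrite /mrestr; congr (P _).
  by apply/seteqP; split => z; [case|move=> Bz; split=> //; case: (BDE z Bz)].
rewrite [X in (_ + X)%E](eq_measure_integral mzero) ?integral_measure_zero ?adde0//.
move=> B mB BDE; rewrite /= /mrestr.
suff -> : B `&` E = set0 by rewrite measure0.
by apply/seteqP; split => z // [/BDE [_ nE] Ez].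
Qed.

Definition pertM (R : realType) (P : probability R R) (A : set R)
  (mA : measurable A) (w1 w2 : {nonneg R}) (x y : R) :=
  measure_add (mrestr P (measurableC mA))
    (measure_add (mscale w1 (\d_x)) (mscale w2 (\d_y))).

Lemma pertME (R : realType) (P : probability R R) (A : set R)
  (mA : measurable A) (w1 w2 : {nonneg R}) (x y : R) (D : set R) :
  pertM P mA w1 w2 x y D =
    (P (D `\` A) + w1%:num%:E * \d_x D + w2%:num%:E * \d_y D)%E.
Proof.
rewrite /pertM measure_addE -addeA; congr (_ + _)%E.
exact: measure_addE.
Qed.

Lemma pert_exists (R : realType) (P : probability R R) (A : set R)
  (mA : measurable A) (w1 w2 x y : R) :
  0 <= w1 -> 0 <= w2 -> FQ P A = w1 + w2 ->
  exists P' : probability R R,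
    (forall D : set R, measurable D ->
       P' D = (P (D `\` A) + w1%:E * \d_x D + w2%:E * \d_y D)%E) /\
    (forall D : set R, measurable D -> (forall s : R, D s -> 0 <= s) ->
       (\int[P']_(s in D) s%:E = \int[P]_(s in D `\` A) s%:E
          + w1%:E * (\d_x D * x%:E) + w2%:E * (\d_y D * y%:E))%E).
Proof.
move=> h1 h2 hA.
have M1 : pertM P mA (NngNum h1) (NngNum h2) x y setT = 1%E.
  rewrite pertME setTD probability_setC// !diracE !in_setT /= !mule1.
  have fA : P A = (w1 + w2)%:E by rewrite -hA /FQ fineK// fin_num_measure.
  by rewrite fA -EFinB -!EFinD; congr EFin; ring.
pose P' := mnormalize (pertM P mA (NngNum h1) (NngNum h2) x y) P.
have P'E D : P' D = pertM P mA (NngNum h1) (NngNum h2) x y D.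
  rewrite /P' /mnormalize; case: ifPn => [/orP[]/eqP H|_].
  - have H' : pertM P mA (NngNum h1) (NngNum h2) x y setT = 0%E := H.
    by move: H'; rewrite M1 => -[] /eqP; rewrite oner_eq0.
  - have H' : pertM P mA (NngNum h1) (NngNum h2) x y setT = +oo%E := H.
    by move: H'; rewrite M1.
  transitivity (pertM P mA (NngNum h1) (NngNum h2) x y D *
     (fine (pertM P mA (NngNum h1) (NngNum h2) x y setT))^-1%:E)%E; first by [].
  by rewrite M1 fine1 invr1 mule1.
exists P'; split.
  by move=> D mD; have h := P'E D; rewrite pertME in h; exact: h.
move=> D mD D0.
rewrite (eq_measure_integral (pertM P mA (NngNum h1) (NngNum h2) x y));
  last by move=> B mB _; exact: P'E.
have mid : measurable_fun D (fun s : R => s%:E).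
  by apply/measurable_EFinP; exact: measurable_id.
have D0' : forall s, D s -> (0 <= s%:E)%E by move=> s Ds; rewrite lee_fin D0.
rewrite /pertM ge0_integral_measure_add//.
rewrite ge0_integral_measure_add//.
rewrite integral_restr//.
rewrite !ge0_integral_mscale//.
rewrite !integral_dirac//.
by rewrite setDE addeA.
Qed.


Lemma cdf_rc (R : realType) (Q : probability R R) (c v : R) :
  FQ Q `]-oo, c] < v -> exists e, 0 < e /\ FQ Q `]-oo, c + e] < v.
Proof.
move=> hv.
have hc : (fun n => Q `]-oo, c + n.+1%:R^-1]) @ \oo --> Q `]-oo, c].
  rewrite (itvNycEbigcap false c).
  apply: (@nonincreasing_cvg_mu _ _ _ Q (fun n => `]-oo, c + n.+1%:R^-1])).
  - by rewrite (le_lt_trans (probability_le1 _ _)) ?ltry.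
  - by move=> n; exact: measurable_itv.
  - by apply: bigcap_measurable => [|n _]; [exists 0%N|exact: measurable_itv].
  - move=> m n mn; apply/subsetPset => z /=; rewrite !in_itv /= => /le_trans; apply.
    by rewrite lerD2l lef_pV2 ?posrE// ler_nat.
apply: contrapT => H.
have : (v%:E <= Q `]-oo, c])%E.
  apply: (cvge_to_ge hc); apply: nearW => n.
  have hn : 0 < n.+1%:R^-1 :> R by rewrite invr_gt0.
  have : ~ (FQ Q `]-oo, c + n.+1%:R^-1] < v) by move=> h; apply: H; exists n.+1%:R^-1.
  move/negP; rewrite -leNgt /FQ => h.
  by rewrite -(@fineK _ (Q _)) ?lee_fin// fin_num_measure.
by rewrite -(@fineK _ (Q _)) ?lee_fin ?fin_num_measure// leNgt hv.
Qed.

Lemma IQ_S (R : realType) (Q : probability R R) (a b : R) (D : set R) :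
  Q `[a, b] = 1%E -> measurable D -> IQ Q D = IQ Q (D `&` `[a, b]).
Proof.
move=> h mD; rewrite /IQ /Rintegral.
have mC : measurable (~` `[a, b]) by apply: measurableC; exact: measurable_itv.
rewrite (negligible_integral mC mD).
- by rewrite setDE setCK.
- exact: (supp_int h mD).
- exact: supp_C0.
Qed.

Lemma int_fin (R : realType) (Q : probability R R) (a b : R) (D : set R) :
  Q `[a, b] = 1%E -> measurable D -> (\int[Q]_(s in D) s%:E)%E \is a fin_num.
Proof. by move=> h mD; have := integrable_fin_num mD (supp_int h mD). Qed.

Lemma pert_real (R : realType) (P : probability R R) (a b : R) (A : set R)
  (mA : measurable A) (w1 w2 x y : R) :
  0 <= a -> P `[a, b] = 1%E -> A `<=` `[a, b] -> `[a, b] x -> `[a, b] y ->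
  0 <= w1 -> 0 <= w2 -> FQ P A = w1 + w2 ->
  exists P' : probability R R,
    [/\ P' `[a, b] = 1%E,
     (forall D : set R, measurable D ->
       FQ P' D = FQ P (D `\` A) + w1 * (x \in D)%:R + w2 * (y \in D)%:R) &
     (forall D : set R, measurable D ->
       IQ P' D = IQ P (D `\` A) + w1 * (x \in D)%:R * x + w2 * (y \in D)%:R * y)].
Proof.
move=> a0 hS AS xS yS h1 h2 hA.
have [P' [hF hI]] := pert_exists mA x y h1 h2 hA.
have mS : measurable `[a, b] by exact: measurable_itv.
have hFQ D : measurable D ->
    FQ P' D = FQ P (D `\` A) + w1 * (x \in D)%:R + w2 * (y \in D)%:R.
  move=> mD; rewrite /FQ hF// !diracE -(@fineK _ (P (D `\` A))); last first.
    by apply: fin_num_measure; exact: measurableD.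
  by rewrite -!EFinM -!EFinD.
have hS' : P' `[a, b] = 1%E.
  have : FQ P' `[a, b] = 1.
    rewrite hFQ// (mem_set xS) (mem_set yS) !mulr1 -addrA -hA.
    rewrite [X in _ = X](_ : 1 = FQ P `[a, b]); last by rewrite /FQ hS.
    rewrite (FQ_add P mS mA) addrC; congr (_ + _); congr (FQ P _).
    by rewrite setIidr.
  rewrite /FQ => h; rewrite -(@fineK _ (P' _)) ?h//.
  by apply: fin_num_measure.
exists P'; split => //.
move=> D mD.
rewrite (IQ_S hS' mD) {1}/IQ /Rintegral hI; last 2 first.
- exact: measurableI.
- by move=> s [_]; rewrite /= in_itv /= => /andP[+ _]; exact: le_trans.
have mDA : measurable (D `&` `[a, b] `\` A) by apply: measurableD => //; exact: measurableI.
rewrite -(@fineK _ (\int[P]_(s in _) _)%E); last exact: (int_fin hS mDA).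
rewrite !diracE -!EFinM -!EFinD /=.
rewrite (IQ_S hS (measurableD mD mA)).
have -> : D `&` `[a, b] `\` A = (D `\` A) `&` `[a, b].
  by apply/seteqP; split => z /= [[]]; tauto.
have -> : (x \in D `&` `[a, b]) = (x \in D).
  by rewrite in_setI (mem_set xS) andbT.
have -> : (y \in D `&` `[a, b]) = (y \in D).
  by rewrite in_setI (mem_set yS) andbT.
by rewrite /IQ /Rintegral !mulrA.
Qed.


Lemma FQ_ge0 (R : realType) (Q : probability R R) (D : set R) : 0 <= FQ Q D.
Proof. by rewrite /FQ fine_ge0. Qed.

Lemma FQ_mono (R : realType) (Q : probability R R) (D E : set R) :
  measurable D -> measurable E -> D `<=` E -> FQ Q D <= FQ Q E.
Proof.
move=> mD mE DE; rewrite /FQ fine_le ?fin_num_measure//.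
by rewrite le_measure ?inE.
Qed.

Lemma FQ_T (R : realType) (Q : probability R R) : FQ Q setT = 1.
Proof. by rewrite /FQ probability_setT. Qed.

Lemma split_sub (R : realType) (Q : probability R R) (a b : R) (D A : set R) :
  Q `[a, b] = 1%E -> measurable D -> measurable A -> A `<=` D ->
  IQ Q D = IQ Q A + IQ Q (D `\` A) /\ FQ Q D = FQ Q A + FQ Q (D `\` A).
Proof.
move=> h mD mA AD; rewrite (IQ_add h mD mA) (FQ_add Q mD mA).
by rewrite setIidr.
Qed.

Lemma split_le (R : realType) (Q : probability R R) (a b : R) (u : R) :
  Q `[a, b] = 1%E ->
  [/\ IQ Q setT = IQ Q `]-oo, u] + IQ Q (~` `]-oo, u]),
      1 = FQ Q `]-oo, u] + FQ Q (~` `]-oo, u]) &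
      u * FQ Q (~` `]-oo, u]) <= IQ Q (~` `]-oo, u])].
Proof.
move=> h.
have mL : measurable `]-oo, u] by exact: measurable_itv.
have [h1 h2] := split_sub h measurableT mL (@subsetT _ _).
split.
- by rewrite h1 setTD.
- by rewrite -(FQ_T Q) h2 setTD.
apply: (IQ_ge h); first exact: measurableC.
by move=> s /=; rewrite in_itv /= => /negP; rewrite -ltNge => /ltW.
Qed.

Lemma itv_sub (R : realType) (u v : R) : u <= v -> `]-oo, u] `<=` `]-oo, v].
Proof. by move=> uv z /=; rewrite !in_itv /= => /le_trans; apply. Qed.

Lemma inL (R : realType) (u s : R) : (`]-oo, u] s) = (s <= u).
Proof. by rewrite /= in_itv. Qed.

Lemma memL (R : realType) (u s : R) : (s \in `]-oo, u]) = (s <= u).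
Proof. by apply/idP/idP; rewrite inE /= in_itv. Qed.


Lemma memI (R : realType) (a b s : R) : (s \in `[a, b]) = (a <= s <= b).
Proof. by apply/idP/idP; rewrite inE /= in_itv. Qed.

Theorem lemma8 (R : realType) (thl thh mu : R)
  (P : probability R R) (pt pd t : R) :
  0 <= thl -> thl < mu -> mu < thh ->
  feasibleRE thl thh mu P pt pd t ->
  (forall (P' : probability R R) (pt' pd' t' : R),
      feasibleRE thl thh mu P' pt' pd' t' ->
      objRE P' pt' pd' t' <= objRE P pt pd t) ->
  forall s : R, mu + pd <= s -> s < thh -> cdfG P s = cdfG P (mu + pd).
Proof.
move=> hthl hmu1 hmu2 [hsupp hwP [hF0 hHE1 hHE2] hmean] hopt s0 hs0c hs0.
rewrite /supported_on in hsupp.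
move: hF0 hHE1 hmean hwP; rewrite /cdfG /condexp_le /meanG /wP.
change (fine (P `]-oo, t])) with (FQ P `]-oo, t]).
change (Rintegral P `]-oo, t] (fun s => s)) with (IQ P `]-oo, t]).
change (Rintegral P setT (fun s => s)) with (IQ P setT).
move=> hF0 hHE1 hmean hwP.
move: hHE1; rewrite /cdfG.
change (fine (P `]-oo, t])) with (FQ P `]-oo, t]) => hHE1.
rewrite /cdfG.
change (FQ P `]-oo, s0] = FQ P `]-oo, mu + pd]).
set c := mu + pd.
have mS : measurable `[thl, thh] by exact: measurable_itv.
have mL (u : R) : measurable `]-oo, u] by exact: measurable_itv.
have Fmono (u v : R) : u <= v -> FQ P `]-oo, u] <= FQ P `]-oo, v].
  by move=> uv; apply: FQ_mono => //; exact: itv_sub.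
have tl : thl <= t.
  rewrite leNgt; apply/negP => tlt.
  have : P `]-oo, t] = 0%E.
    apply: (subset_measure0 (mL t) (measurableC mS) _ (supp_C0 hsupp)).
    move=> z; rewrite inL => zt /=; rewrite in_itv /= => /andP[hz _].
    by move: (le_lt_trans hz (le_lt_trans zt tlt)); rewrite ltxx.
  by move=> h; move: hF0; rewrite /FQ h /= ltxx.
have Ft0 : FQ P `]-oo, t] != 0 by rewrite gt_eqF.
have hIt : IQ P `]-oo, t] = (t - pd) * FQ P `]-oo, t].
  by rewrite hHE1 divfK.
have pd0 : 0 <= pd.
  have := IQ_le hsupp (mL t) (fun s (hs : `]-oo, t] s) => (eq_ind _ id hs _ (inL t s))).
  rewrite hIt => h; nra.
have Ft1 : FQ P `]-oo, t] <= 1 by rewrite -(FQ_T P); apply: FQ_mono.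
have [splT1 splT2 splT3] := split_le t hsupp.
have hGt0 := FQ_ge0 P (~` `]-oo, t]).
have ct : t <= c.
  rewrite /c; nra.
apply: contrapT => hne.
have hlt : FQ P `]-oo, c] < FQ P `]-oo, s0].
  by rewrite lt_neqAle Fmono// andbT; apply/eqP => e; apply: hne.
have [e [e0 he]] := cdf_rc hlt.
have ces0 : c + e < s0.
  rewrite ltNge; apply/negP => h; move: (Fmono _ _ h) => h'.
  by move: (lt_le_trans he h'); rewrite ltxx.
pose A := `]-oo, s0] `\` `]-oo, c + e].
have mA : measurable A by apply: measurableD.
have Ain s : A s -> c + e < s /\ s <= s0.
  by rewrite /A /= !in_itv /= => -[-> /negP]; rewrite -ltNge.
pose m0 := FQ P A.
have hm0 : FQ P `]-oo, s0] = FQ P `]-oo, c + e] + m0.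
  rewrite (FQ_add P (mL s0) (mL (c + e))) setIidr //.
  by apply: itv_sub; exact: ltW.
have m0pos : 0 < m0 by lra.
pose IA := IQ P A.
have IAlo : (c + e) * m0 <= IA.
  by apply: (IQ_ge hsupp mA) => s /Ain [/ltW].
have IAhi : IA <= s0 * m0.
  by apply: (IQ_le hsupp mA) => s /Ain [].
have AG (u : R) : u < c + e -> A `<=` ~` `]-oo, u].
  move=> uce s /Ain [hs _]; rewrite /= in_itv /= => hsu.
  by move: (lt_trans (le_lt_trans hsu uce) hs); rewrite ltxx.
have GD (u : R) (s : R) : (~` `]-oo, u] `\` A) s -> u <= s.
  by move=> [] /=; rewrite in_itv /= => /negP; rewrite -ltNge => /ltW.
have mG (u : R) : measurable (~` `]-oo, u]) by apply: measurableC.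
have tce : t < c + e by lra.
have [sI sF] := split_sub hsupp (mG t) mA (AG t tce).
have lbt : t * FQ P (~` `]-oo, t] `\` A) <= IQ P (~` `]-oo, t] `\` A).
  by apply: (IQ_ge hsupp); [exact: measurableD|exact: GD].
have hG'0 := FQ_ge0 P (~` `]-oo, t] `\` A).
have emct : e * m0 <= c - t.
  rewrite -/m0 -/IA in sI sF; rewrite /c.
  nra.
have em0 : 0 < e * m0 by rewrite mulr_gt0.
pose dl := e * m0 / 2.
have dl0 : 0 < dl by rewrite /dl divr_gt0 // mulr_gt0.
have dlem : dl < e * m0 by rewrite /dl; lra.
pose x := c - dl.
have tx : t < x by rewrite /x; lra.
have xc : x < c by rewrite /x; lra.
have thx : 0 < thh - x by rewrite /x; lra.
pose w1 := (thh * m0 - IA) / (thh - x).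
pose w2 := (IA - x * m0) / (thh - x).
have w1pos : 0 < w1.
  rewrite /w1 divr_gt0 //.
  have : 0 < (thh - s0) * m0 by rewrite mulr_gt0 // subr_gt0.
  lra.
have w2pos : 0 <= w2.
  rewrite /w2 divr_ge0 //; last exact: ltW.
  have : 0 < (c + e - x) * m0 by rewrite mulr_gt0 //; rewrite /x; lra.
  lra.
have hw : FQ P A = w1 + w2.
  rewrite -/m0 /w1 /w2 -mulrDl.
  have -> : thh * m0 - IA + (IA - x * m0) = m0 * (thh - x) by ring.
  by rewrite mulfK // gt_eqF.
have hwm : w1 * x + w2 * thh = IA.
  have thx0 : thh - x != 0 by rewrite gt_eqF.
  rewrite /w1 /w2; field; exact: thx0.
have AS : A `<=` `[thl, thh].
  move=> s /Ain [h1 h2]; rewrite /= in_itv /=; apply/andP; split; lra.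
have xS : `[thl, thh] x by rewrite /= in_itv /=; apply/andP; split; lra.
have thS : `[thl, thh] thh by rewrite /= in_itv /=; apply/andP; split; lra.
have [P' [hS' hF' hI']] := pert_real mA hthl hsupp AS xS thS (ltW w1pos) w2pos hw.
rewrite -/m0 in hw.
have hc : c = mu + pd by [].
have hx : x = c - dl by [].
have LA (u : R) : u < c + e -> `]-oo, u] `\` A = `]-oo, u].
  move=> uce; apply/seteqP; split => z; first by case.
  move=> hz; split => // /Ain [hz' _]; move: hz; rewrite inL => hz.
  by move: (lt_trans (le_lt_trans hz uce) hz'); rewrite ltxx.
have xtF : (x <= t) = false by apply/negbTE; rewrite -ltNge.
have thtF : (thh <= t) = false by apply/negbTE; rewrite -ltNge; lra.
have hFt' : FQ P' `]-oo, t] = FQ P `]-oo, t].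
  by rewrite hF' // LA // !memL xtF thtF /= !mulr0 !addr0.
have hIt' : IQ P' `]-oo, t] = IQ P `]-oo, t].
  by rewrite hI' // LA // !memL xtF thtF /= !mulr0 !mul0r !addr0.
have hmean' : IQ P' setT = mu.
  rewrite hI' // setTD !in_setT /= !mulr1 -hmean.
  have [h1 _] := split_sub hsupp measurableT mA (@subsetT _ _).
  by rewrite h1 setTD -/IA -hwm; ring.
pose pt' := Rintegral P' `[mu + pd, thh] (fun s => s - (mu + pd)).
have feas : feasibleRE thl thh mu P' pt' pd t.
  split; [exact: hS' | exact: lexx | | exact: hmean'].
  split.
  - rewrite /cdfG; change (0 < FQ P' `]-oo, t]); by rewrite hFt'.
  - rewrite /condexp_le /cdfG.
    change (t - pd = IQ P' `]-oo, t] / FQ P' `]-oo, t]).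
    by rewrite hFt' hIt'.
  move=> t' tt'; rewrite /condexp_le /cdfG.
  change (IQ P' `]-oo, t'] / FQ P' `]-oo, t'] <= t' - pd).
  have Fp : 0 < FQ P' `]-oo, t'].
    apply: (lt_le_trans _ (FQ_mono P' (mL t) (mL t') (itv_sub (ltW tt')))).
    by rewrite hFt'.
  rewrite ler_pdivrMr //.
  have [t'x|xt'] := ltP t' x.
  + have t'ce : t' < c + e by lra.
    have xF : (x <= t') = false by apply/negbTE; rewrite -ltNge.
    have thF : (thh <= t') = false by apply/negbTE; rewrite -ltNge; lra.
    rewrite hF' // hI' // LA // !memL xF thF /= !mulr0 !mul0r !addr0.
    have := hHE2 t' tt'; rewrite /condexp_le /cdfG.
    change (IQ P `]-oo, t'] / FQ P `]-oo, t'] <= t' - pd -> IQ P `]-oo, t'] <= (t' - pd) * FQ P `]-oo, t']).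
    have Fp2 : 0 < FQ P `]-oo, t'] := lt_le_trans hF0 (Fmono _ _ (ltW tt')).
    by rewrite ler_pdivrMr.
  have [t'c|ct'] := ltP t' c.
  + have t'ce : t' < c + e by lra.
    have thF : (thh <= t') = false by apply/negbTE; rewrite -ltNge; lra.
    rewrite hF' // hI' // LA // !memL xt' thF /= !mulr0 !mul0r !addr0 !mulr1.
    have [g1 g2 g3] := split_le t' hsupp.
    have [sI' sF'] := split_sub hsupp (mG t') mA (AG t' t'ce).
    rewrite -/m0 -/IA in sI' sF'.
    have lb' : t' * FQ P (~` `]-oo, t'] `\` A) <= IQ P (~` `]-oo, t'] `\` A).
      by apply: (IQ_ge hsupp); [exact: measurableD|exact: GD].
    have G2 := FQ_ge0 P (~` `]-oo, t'] `\` A).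
    have eG : FQ P (~` `]-oo, t'] `\` A) = 1 - FQ P `]-oo, t'] - m0 by lra.
    rewrite eG in lb'.
    have p1 : 0 <= w1 * (t' - x) by rewrite mulr_ge0 ?subr_ge0 // ltW.
    have p2 : 0 <= pd * (1 - FQ P `]-oo, t'] - w1) by rewrite mulr_ge0 // ; lra.
    have p3 : 0 <= (c - t') * m0 by rewrite mulr_ge0 //; lra.
    lra.
  have [g1 g2 g3] := split_le t' hS'.
  have G2 := FQ_ge0 P' (~` `]-oo, t']).
  have eG : FQ P' (~` `]-oo, t']) = 1 - FQ P' `]-oo, t'] by lra.
  rewrite eG in g3.
  have p2 : 0 <= pd * (1 - FQ P' `]-oo, t']) by rewrite mulr_ge0 //; lra.
  lra.
have := hopt _ _ _ _ feas; rewrite /objRE /cdfG.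
change (pt' + pd * (1 - FQ P' `]-oo, t]) <= pt + pd * (1 - FQ P `]-oo, t]) -> False).
rewrite hFt' => hle.
have mCT : measurable `[c, thh] by exact: measurable_itv.
have xCF : (x \in `[c, thh]) = false.
  by rewrite memI leNgt xc.
have thCT : (thh \in `[c, thh]) = true.
  by rewrite memI lexx andbT; apply: ltW; lra.
have ACT : A `<=` `[c, thh].
  move=> z /Ain [h1 h2]; rewrite /= in_itv /=; apply/andP; split; lra.
have [sJ sJF] := split_sub hsupp mCT mA ACT.
rewrite -/m0 -/IA in sJ sJF.
move: hwP; rewrite -/c (Rint_shift c hsupp mCT) sJ sJF => hwP.
move: hle; rewrite /pt' -/c (Rint_shift c hS' mCT) hF' // hI' // xCF thCT /= ?mulr0 ?mul0r ?add0r ?addr0 ?mulr1 => hle.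
have p1 : 0 < w1 * dl by rewrite mulr_gt0.
have p2 : w1 * x = w1 * c - w1 * dl by rewrite hx; ring.
have p3 : c * m0 = c * w1 + c * w2 by rewrite hw; ring.
lra.
Qed.
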